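(* Let Assumption 1 hold, let $\{\mathbf x_k\}$ be generated by Algorithm MADS-PIP, let $\bar{\mathbf x}$ be an end-path point and let $\bar{\mathbf d}$ be a path-refining direction for $\bar{\mathbf x}$. If $f$, $c^{int}$ and $c^{ext}$ are Lipschitz continuous near $\bar{\mathbf x}$, then $(c^{ext})^\circ(\bar{\mathbf x};\bar{\mathbf d})\ge0$.
   Context: Consider the problem of minimizing $f(\mathbf x)$ over $\mathbf x\in\mathbb R^n$ subject to $g_\ell(\mathbf x)\le 0$ ($\ell=1,\dots,m$) and $h_j(\mathbf x)=0$ ($j=1,\dots,p$), where $f,g_\ell,h_j:\mathbb R^n\to\mathbb R\cup\{+\infty\}$. The index set $\{1,\dots,m\}$ is partitioned into disjoint sets $\mathcal G^{int}$ and $\mathcal G^{ext}$, fixed throughout. Define $\Omega^{int}=\{\mathbf x: g_\ell(\mathbf x)\le 0\ \forall\ell\in\mathcal G^{int}\}$, $\Omega^{ext}=\{\mathbf x: g_\ell(\mathbf x)\le0\ \forall \ell\in\mathcal G^{ext},\ h_j(\mathbf x)=0\ \forall j\}$, $\Omega=\Omega^{int}\cap\Omega^{ext}$. Let $\phi^{prox}(\mathbf x)=\max_{\ell\in\mathcal G^{int}}g_\ell(\mathbf x)$; let $c^{int}(\mathbf x)=-\prod_{\ell\in\mathcal G^{int}}\min\{1,-g_\ell(\mathbf x)\}$ if $g_\ell(\mathbf x)\le0$ for all $\ell\in\mathcal G^{int}$, and $c^{int}(\mathbf x)=\phi^{prox}(\mathbf x)$ otherwise; let $c^{ext}(\mathbf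 x)=\sum_{\ell\in\mathcal G^{ext}}(\max\{0,g_\ell(\mathbf x)\})^2+\sum_{j=1}^p h_j(\mathbf x)^2$. (If $\mathcal G^{int}=\emptyset$, then $c^{int}\equiv-1$ and $[\phi^{prox}]^2$ is read as $+\infty$.) For $\rho>0$ the merit function is $z(\mathbf x;\rho)=f(\mathbf x)-\rho\log(-c^{int}(\mathbf x))+\frac1\rho c^{ext}(\mathbf x)$ if $c^{int}(\mathbf x)<0$, and $z(\mathbf x;\rho)=+\infty$ otherwise. Algorithm MADS-PIP: inputs $\mathbf x_0$ with $g_\ell(\mathbf x_0)<0$ for all $\ell\in\mathcal G^{int}$ and $z(\mathbf x_0;\rho_0)<+\infty$, $\rho_0>0$, $\theta_\rho\in(0,1)$, $\Delta_0>0$, $\theta_\Delta\in(0,1)\cap\mathbb Q$, $\beta>1$. For $k=0,1,2,\dots$ (the algorithm never stops): mesh $\mathcal M_k=\{\mathbf x_k+\delta_k\mathbf u:\mathbf u\in\mathbb Z^n\}$ with $\delta_k=\min\{\Delta_k,\Delta_k^2/\Delta_0\}$; frame $\mathcal F_k=\{\mathbf x\in\mathcal M_k:\|\mathbf x-\mathbf x_k\|\le\Delta_k\}$. Search: a finite (possibly empty) set $\mathcal S_k\subset\mathcal M_k$ is examined; if some $\mathbf s\in\mathcal S_k$ satisfies $z(\mathbf s;\rho_k)<z(\mathbf x_k;\rho_k)$, set $\mathbf x_{k+1}=\mathbf s$, $\Delta_{k+1}=\Delta_k/\theta_\Delta$, $\rho_{k+1}=\rho_k$ (successful iteration). Otherwise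 poll: choose a finite set $\mathcal D_k$ of nonzero directions with $\mathbf x_k+\mathbf d\in\mathcal F_k$ for all $\mathbf d\in\mathcal D_k$; if some $\mathbf d\in\mathcal D_k$ satisfies $z(\mathbf x_k+\mathbf d;\rho_k)<z(\mathbf x_k;\rho_k)$, set $\mathbf x_{k+1}=\mathbf x_k+\mathbf d$, $\Delta_{k+1}=\Delta_k/\theta_\Delta$, $\rho_{k+1}=\rho_k$ (successful). Otherwise the iteration is unsuccessful: $\mathbf x_{k+1}=\mathbf x_k$, $\Delta_{k+1}=\theta_\Delta\Delta_k$, and $\rho_{k+1}=\theta_\rho\rho_k$ if $\Delta_{k+1}\le\min\{\rho_k^\beta,[\phi^{prox}(\mathbf x_k)]^2\}$, else $\rho_{k+1}=\rho_k$. The path-following index set is $\mathcal K_\rho=\{k:\rho_{k+1}<\rho_k\}$ and $\{\mathbf x_k\}_{k\in\mathcal K_\rho}$ is the path-following subsequence. A point $\bar{\mathbf x}$ is an end-path point if there is an infinite $\mathcal K_\rho^{x}\subseteq\mathcal K_\rho$ with $\lim_{k\in\mathcal K_\rho^x}\mathbf x_k=\bar{\mathbf x}$; $\{\mathbf x_k\}_{k\in\mathcal K^x_\rho}$ is then an end-path subsequence. Assumption 1: for every $\alpha\in\mathbb R$ the level set $\{\mathbf x\in\mathbb R^n: f(\mathbf x)\le\alpha\}$ is bounded. Path-refining direction: $\bar{\mathbf d}\in\mathbb R^n$ is a path-refining direction for the end-path point $\bar{\mathbf x}$ if there exist an infinite index set $\mathcal K^x_\rho\subseteq\mathcal K_\rho$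 with $\lim_{k\in\mathcal K^x_\rho}\mathbf x_k=\bar{\mathbf x}$ and poll directions $\mathbf d_k\in\mathcal D_k$ ($k\in\mathcal K^x_\rho$) such that $\lim_{k\in\mathcal K^x_\rho}\mathbf d_k/\|\mathbf d_k\|=\bar{\mathbf d}$ and $c^{int}(\mathbf x_k+\mathbf d_k)\le c^{int}(\mathbf x_k)$ for all $k\in\mathcal K^x_\rho$. Clarke generalized directional derivative of $c$ at $\mathbf x$ in direction $\mathbf d$: $c^\circ(\mathbf x;\mathbf d)=\limsup_{\mathbf y\to\mathbf x,\ t\searrow0}\frac{c(\mathbf y+t\mathbf d)-c(\mathbf y)}{t}$. *)

(* Defs.v *)
(* R : realType, vectors in R^n are row vectors 'rV[R]_n,
   extended-real values \bar R model R \cup {+oo}. *)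
From HB Require Import structures.
From mathcomp Require Import all_boot all_order all_algebra.
From mathcomp Require Import all_classical all_reals all_analysis.
Set Implicit Arguments. Unset Strict Implicit. Unset Printing Implicit Defensive.
Import Order.TTheory GRing.Theory Num.Theory.
Local Open Scope ring_scope.

Section MadsPip.
Context {R : realType} {n m p : nat}.

Notation vec := 'rV[R]_n.

Definition enorm (x : vec) : R := Num.sqrt (\sum_(i < n) x 0 i ^+ 2).

Definition vcvg (u : nat -> vec) (l : vec) : Prop :=
  forall e : R, 0 < e -> exists N : nat, forall j, (N <= j)%N -> enorm (u j - l) < e.

Variables (f : vec -> \bar R) (g : 'I_m -> vec -> \bar R) (h : 'I_p -> vec -> \bar R)
          (Gint : {set 'I_m}).
(* G^ext is the complement ~: Gint *)

Definition phiprox (x : vec) : \bar R := \big[Order.max/-oo%E]_(l in Gint) g l x.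

Definition phiprox_sq (x : vec) : \bar R :=
  if #|Gint| == 0%N then +oo%E else (phiprox x * phiprox x)%E.

Definition cint (x : vec) : \bar R :=
  if [forall l in Gint, (g l x <= 0)%E]
  then (- \prod_(l in Gint) Num.min 1 (- fine (g l x)))%:E
  else phiprox x.

Definition cext (x : vec) : \bar R :=
  ((\sum_(l in ~: Gint) (Order.max 0 (g l x)) * (Order.max 0 (g l x)))
   + \sum_(j < p) (h j x * h j x))%E.

Definition zmerit (rho : R) (x : vec) : \bar R :=
  if (cint x < 0)%E
  then (f x + (- (rho * ln (- fine (cint x))))%:E + (rho^-1)%:E * cext x)%E
  else +oo%E.

Definition mesh_size (Delta0 Delta : R) : R := Num.min Delta (Delta ^+ 2 / Delta0).

Definition in_mesh (delta : R) (xk x : vec) : Prop :=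
  exists u : 'rV[int]_n, x = xk + delta *: map_mx (fun z : int => z%:~R) u.

Definition in_frame (delta Delta : R) (xk x : vec) : Prop :=
  in_mesh delta xk x /\ enorm (x - xk) <= Delta.

Definition mads_pip (x0 : vec) (rho0 theta_rho Delta0 theta_Delta beta : R)
  (x : nat -> vec) (Delta rho : nat -> R) (S D : nat -> seq vec) : Prop :=
  (forall l, l \in Gint -> (g l x0 < 0)%E) /\
  (zmerit rho0 x0 < +oo)%E /\
  0 < rho0 /\ (0 < theta_rho < 1) /\ 0 < Delta0 /\
  (0 < theta_Delta < 1) /\ (exists q : rat, theta_Delta = ratr q) /\
  1 < beta /\
  x 0%N = x0 /\ Delta 0%N = Delta0 /\ rho 0%N = rho0 /\
  (forall k : nat,
        let delta := mesh_size Delta0 (Delta k) in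
        (forall s, s \in S k -> in_mesh delta (x k) s) /\
        ( (* successful search *)
          (exists2 s, s \in S k & (zmerit (rho k) s < zmerit (rho k) (x k))%E
             /\ x k.+1 = s /\ Delta k.+1 = Delta k / theta_Delta /\ rho k.+1 = rho k)
          \/
          (* poll *)
          ((forall s, s \in S k -> ~ (zmerit (rho k) s < zmerit (rho k) (x k))%E) /\
           (forall d, d \in D k -> d != 0 /\ in_frame delta (Delta k) (x k) (x k + d)) /\
           ( (* successful poll *)
             (exists2 d, d \in D k &
                (zmerit (rho k) (x k + d) < zmerit (rho k) (x k))%E
                /\ x k.+1 = x k + d /\ Delta k.+1 = Delta k / theta_Delta
                /\ rho k.+1 = rho k)
             \/
             (* unsuccessful iteration *)
             ((forall d, d \in D k ->
                 ~ (zmerit (rho k) (x k + d) < zmerit (rho k) (x k))%E) /\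
              x k.+1 = x k /\ Delta k.+1 = theta_Delta * Delta k /\
              rho k.+1 = (if ((Delta k.+1)%:E <=
                               Order.min ((powR (rho k) beta)%:E) (phiprox_sq (x k)))%E
                          then theta_rho * rho k else rho k)))))).

Definition path_following (rho : nat -> R) (k : nat) : Prop := rho k.+1 < rho k.

(* end-path point: limit of x_k along an infinite subset of K_rho, the infinite
   index set being enumerated by a strictly increasing sigma *)
Definition end_path_point (rho : nat -> R) (x : nat -> vec) (xbar : vec) : Prop :=
  exists sigma : nat -> nat,
    (forall j, (sigma j < sigma j.+1)%N) /\
    (forall j, path_following rho (sigma j)) /\
    vcvg (fun j => x (sigma j)) xbar.

Definition path_refining (rho : nat -> R) (x : nat -> vec) (D : nat -> seq vec)
  (xbar dbar : vec) : Prop :=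
  exists (sigma : nat -> nat) (d : nat -> vec),
    (forall j, (sigma j < sigma j.+1)%N) /\
    (forall j, path_following rho (sigma j)) /\
    vcvg (fun j => x (sigma j)) xbar /\
    (forall j, d j \in D (sigma j)) /\
    vcvg (fun j => (enorm (d j))^-1 *: d j) dbar /\
    (forall j, (cint (x (sigma j) + d j) <= cint (x (sigma j)))%E).

End MadsPip.

(* Assumption 1: all level sets of f are bounded *)
Definition bounded_level_sets {R : realType} {n : nat} (f : 'rV[R]_n -> \bar R) : Prop :=
  forall alpha : R, exists M : R, forall x, (f x <= alpha%:E)%E -> enorm x <= M.

Definition lipschitz_near {R : realType} {n : nat} (c : 'rV[R]_n -> \bar R)
  (xbar : 'rV[R]_n) : Prop :=
  exists eps : R, 0 < eps /\ exists L : R,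
    forall y y', enorm (y - xbar) < eps -> enorm (y' - xbar) < eps ->
      c y \is a fin_num /\ `|fine (c y) - fine (c y')| <= L * enorm (y - y').

(* Clarke generalized directional derivative
   c°(x; d) = limsup_{y -> x, t \searrow 0} (c(y + t d) - c(y)) / t,
   written as inf over delta > 0 of the sup over ||y - x|| < delta, 0 < t < delta. *)
Definition clarke_dd {R : realType} {n : nat} (c : 'rV[R]_n -> \bar R)
  (x d : 'rV[R]_n) : \bar R :=
  ereal_inf [set ereal_sup [set r : \bar R | exists (y : 'rV[R]_n) (t : R),
                               [/\ enorm (y - x) < delta, 0 < t, t < delta &
                                   r = ((c (y + t *: d)%R - c y) * (t^-1)%:E)%E]]
            | delta in [set delta : R | 0 < delta]].

(* Main.v *)
Require Import Defs.
From HB Require Import structures.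
From mathcomp Require Import all_boot all_order all_algebra.
From mathcomp Require Import all_classical all_reals all_analysis.
From mathcomp Require Import ring lra zify.
Import Order.TTheory GRing.Theory Num.Theory.
Local Open Scope ring_scope.

Section Enorm.
Context {R : realType} {n : nat}.
Implicit Types u v : 'rV[R]_n.

Lemma enorm_ge0 v : 0 <= enorm v.
Proof. exact: sqrtr_ge0. Qed.

Lemma enormZ (c : R) v : enorm (c *: v) = `|c| * enorm v.
Proof.
rewrite /enorm -sqrtr_sqr -sqrtrM ?sqr_ge0 // mulr_sumr.
by congr Num.sqrt; apply: eq_bigr => i _; rewrite mxE exprMn.
Qed.

Lemma enormN v : enorm (- v) = enorm v.
Proof. by rewrite -scaleN1r enormZ normrN normr1 mul1r. Qed.

Lemma enormB u v : enorm (u - v) = enorm (v - u).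
Proof. by rewrite -enormN opprB. Qed.

Lemma cs_sum (a b : 'I_n -> R) :
  \sum_i a i * b i <= Num.sqrt (\sum_i a i ^+ 2) * Num.sqrt (\sum_i b i ^+ 2).
Proof.
set A := \sum_i a i ^+ 2; set B := \sum_i b i ^+ 2; set P := \sum_i a i * b i.
have A0 : 0 <= A by apply: sumr_ge0 => i _; exact: sqr_ge0.
have B0 : 0 <= B by apply: sumr_ge0 => i _; exact: sqr_ge0.
have [Bz|Bpos] := eqVneq B 0.
  have bz : forall i, b i = 0.
    move=> i; apply/eqP; rewrite -sqrf_eq0; apply/eqP.
    exact: (psumr_eq0P (fun i _ => sqr_ge0 (b i)) Bz).
  rewrite /P big1 ?mulr_ge0 ?sqrtr_ge0 // => i _; by rewrite bz mulr0.
have Bp : 0 < B by rewrite lt_neqAle eq_sym Bpos B0.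
have key : P ^+ 2 <= A * B.
  have H : 0 <= \sum_i (a i - P / B * b i) ^+ 2 by apply: sumr_ge0 => i _; exact: sqr_ge0.
  have E0 : forall c, \sum_i (a i - c * b i) ^+ 2 = A - (c * P) *+ 2 + c ^+ 2 * B.
    move=> c; rewrite /A /B /P !mulr_sumr -sumrMnl -sumrB -big_split /=.
    by apply: eq_bigr => i _; ring.
  have E : \sum_i (a i - P / B * b i) ^+ 2 = A - P ^+ 2 / B.
    by rewrite E0; field.
  rewrite E subr_ge0 ler_pdivrMr // in H.
apply: (le_trans (ler_norm P)).
rewrite -sqrtrM // -sqrtr_sqr ler_sqrt ?mulr_ge0 //.
Qed.

Lemma enormD u v : enorm (u + v) <= enorm u + enorm v.
Proof.
rewrite /enorm.
have U0 : 0 <= \sum_(i < n) u 0 i ^+ 2 by apply: sumr_ge0 => i _; exact: sqr_ge0.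
have V0 : 0 <= \sum_(i < n) v 0 i ^+ 2 by apply: sumr_ge0 => i _; exact: sqr_ge0.
rewrite -[X in _ <= X]ger0_norm ?addr_ge0 ?sqrtr_ge0 // -sqrtr_sqr ler_sqrt ?sqr_ge0 //.
have -> : \sum_(i < n) (u + v) 0 i ^+ 2 =
  \sum_(i < n) u 0 i ^+ 2 + (\sum_(i < n) u 0 i * v 0 i) *+ 2 + \sum_(i < n) v 0 i ^+ 2.
  rewrite -sumrMnl -!big_split /=; apply: eq_bigr => i _; rewrite mxE; ring.
rewrite sqrrD !sqr_sqrtr //.
by rewrite lerD2r lerD2l lerMn2r /= cs_sum.
Qed.

Lemma enormD3 u v : enorm u <= enorm (u - v) + enorm v.
Proof. by rewrite -{1}(subrK v u) enormD. Qed.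

Lemma enorm_gt0 v : v != 0 -> 0 < enorm v.
Proof.
move=> v0; rewrite lt_neqAle enorm_ge0 andbT eq_sym; apply/negP => /eqP E.
move/negP: v0; apply; apply/eqP/rowP => i; rewrite mxE.
have S0 : \sum_(i < n) v 0 i ^+ 2 = 0.
  apply/eqP; rewrite eq_le sumr_ge0 ?andbT; last by move=> *; exact: sqr_ge0.
  by rewrite -sqrtr_eq0; apply/eqP.
have := @psumr_eq0P _ _ xpredT (fun i => v 0 i ^+ 2) (fun i _ => sqr_ge0 _) S0 i isT.
by move/eqP; rewrite sqrf_eq0 => /eqP.
Qed.

End Enorm.

Section H. Variable R : realType.
Lemma aux_s2 (F0 F1 E0 E1 r a b Lf t : R) :
  F0 - r*a + r^-1*E0 <= F1 - r*b + r^-1*E1 -> r*a <= r*b ->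
  `|F1 - F0| <= Lf * t -> Lf * t <= `|Lf| * t -> r^-1*E0 - r^-1*E1 <= `|Lf|*t.
Proof.
move=> H1 H2 H3 H4; have H5 := ler_norm (F1 - F0).
move: H1 H2 H3 H4 H5; set ra := r * a; set rb := r * b; set u := r^-1 * E0; set v := r^-1 * E1.
set w := `|F1 - F0|; set l := Lf * t; set l' := `|Lf| * t. lra.
Qed.
Lemma aux_s5 (rk A e : R) : 0 <= rk -> 0 <= A -> rk < e / 2 / (A + 1) -> rk * A <= e / 2.
Proof.
move=> h0 h1; rewrite ltr_pdivlMr ?ltr_wpDl //; nra.
Qed.
Lemma aux_fin (E0 E1 E2 rk A Lc t nu e : R) : 0 < t -> 0 <= nu -> 0 <= rk ->
  E0 - E1 <= rk * (A * t) -> E1 - E2 <= Lc * (t * nu) -> rk * A <= e / 2 ->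
  Lc * nu <= e / 2 -> - e * t <= E2 - E0.
Proof.
move=> t0 nu0 rk0 h1 h2 h3 h4.
have h5 : rk * A * t <= e / 2 * t by apply: ler_wpM2r => //; exact: ltW.
have h6 : Lc * nu * t <= e / 2 * t by apply: ler_wpM2r => //; exact: ltW.
move: h1 h2 h5 h6; rewrite !mulrA (mulrAC Lc t nu).
set a := rk * A * t; set b := Lc * nu * t; set c := e * t; rewrite -(mulrAC e) -/c.
rewrite mulNr -/c. lra.
Qed.
End H.
Arguments aux_s2 {R F0 F1 E0 E1 r a b Lf t}.
Arguments aux_s5 {R rk A e}.
Arguments aux_fin {R E0 E1 E2 rk A Lc t nu e}.

Theorem mainTheorem5 (R : realType) (n m p : nat)
  (f : 'rV[R]_n -> \bar R) (g : 'I_m -> 'rV[R]_n -> \bar R)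
  (h : 'I_p -> 'rV[R]_n -> \bar R) (Gint : {set 'I_m})
  (* f, g_l, h_j take values in R \cup {+oo} *)
  (hf : forall x, f x != -oo%E)
  (hg : forall l x, g l x != -oo%E)
  (hh : forall j x, h j x != -oo%E)
  (x0 : 'rV[R]_n) (rho0 theta_rho Delta0 theta_Delta beta : R)
  (x : nat -> 'rV[R]_n) (Delta rho : nat -> R) (S D : nat -> seq 'rV[R]_n)
  (xbar dbar : 'rV[R]_n) :
  bounded_level_sets f ->
  mads_pip f g h Gint x0 rho0 theta_rho Delta0 theta_Delta beta x Delta rho S D ->
  end_path_point rho x xbar ->
  path_refining g Gint rho x D xbar dbar ->
  lipschitz_near f xbar ->
  lipschitz_near (cint g Gint) xbar ->
  lipschitz_near (cext g h Gint) xbar ->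
  (0 <= clarke_dd (cext g h Gint) xbar dbar)%E.
Proof.
move=> _ [hx0 [hz0 [rho0p [/andP[tr0 tr1] [D0p [/andP[td0 td1] [_ [hbeta
  [ex0 [eD0 [er0 Hstep]]]]]]]]]]] _
  [sig [d [sig_inc [sig_pf [xcvg [dD [ucvg cint_le]]]]]]]
  [ef [ef0 [Lf HLf]]] [eci [eci0 [Lci HLci]]] [ec [ec0 [Lc HLc]]].
have rho_step : forall k, rho k.+1 = rho k \/ rho k.+1 = theta_rho * rho k.
  move=> k; move: (Hstep k) => /= [_ [[s _ [_ [_ [_ ->]]]]|
    [_ [_ [[dd _ [_ [_ [_ ->]]]]|[_ [_ [_ ->]]]]]]]]; try by left.
  by case: ifP; [right|left].
have rho_pos : forall k, 0 < rho k.
  elim => [|k IH]; first by rewrite er0.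
  by case: (rho_step k) => ->//; exact: mulr_gt0.
have rho_le : forall k, rho k.+1 <= rho k.
  move=> k; case: (rho_step k) => -> //; have := rho_pos k; nra.
have rho_mono : forall a b, (a <= b)%N -> rho b <= rho a.
  move=> a b /subnK <-; elim: (b - a)%N => [|c IH]; rewrite ?add0n //= addSn.
  exact: le_trans (rho_le _) IH.
have pf_info : forall k, path_following rho k ->
  [/\ forall dd, dd \in D k ->
        ~ (zmerit f g h Gint (rho k) (x k + dd) < zmerit f g h Gint (rho k) (x k))%E,
      forall dd, dd \in D k -> dd != 0 /\ enorm dd <= Delta k,
      Delta k.+1 = theta_Delta * Delta k,
      Delta k.+1 <= powR (rho k) beta & rho k.+1 = theta_rho * rho k].
  move=> k; rewrite /path_following; move: (Hstep k) => /= [_ [[s _ [_ [_ [_ ->]]]]|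
    [_ [HD [[dd _ [_ [_ [_ ->]]]]|[Hnd [_ [HDel Hr]]]]]]]]; try by rewrite ltxx.
  rewrite Hr; case: ifP => [Hc _|_]; last by rewrite ltxx.
  split=> //.
  - move=> dd /HD [? [_ Hf]]; split=> //; by rewrite (addrC (x k)) addrK in Hf.
  - by move: Hc; rewrite le_min => /andP[+ _]; rewrite lee_fin.
have cint_neg : forall k, (cint g Gint (x k) < 0)%E.
  have zlt : forall r y w, (zmerit f g h Gint r y < w)%E -> (cint g Gint y < 0)%E.
    by move=> r y w; rewrite /zmerit; case: ifP => // _; rewrite ltNge leey.
  elim => [|k IH]; first by rewrite ex0; exact: zlt hz0.
  move: (Hstep k) => /= [_ [[s _ [Hs [-> _]]]|[_ [_ [[dd _ [Hs [-> _]]]|[_ [-> _]]]]]]] //;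
    exact: zlt Hs.
have rsig : forall j, rho (sig j) <= theta_rho ^+ j * rho0.
  elim => [|j IH]; first by rewrite expr0 mul1r -er0 rho_mono.
  have [_ _ _ _ Hr] := pf_info _ (sig_pf j).
  apply: le_trans (rho_mono _ _ (sig_inc j)) _.
  by rewrite Hr exprS -mulrA ler_pM2l.
have rev : forall e, 0 < e -> exists N, forall j, (N <= j)%N -> rho (sig j) < e.
  move=> e e0.
  have th1 : `|theta_rho| < 1 by rewrite ger0_norm ?ltW.
  have [N _ HN] := cvgr0_norm_lt _ (cvg_expr th1) _ (divr_gt0 e0 rho0p).
  exists N => j Nj; apply: le_lt_trans (rsig j) _.
  have := HN N (leqnn N); rewrite /= ger0_norm ?exprn_ge0 ?ltW // => HN'.
  have : theta_rho ^+ j <= theta_rho ^+ N by apply: ler_wiXn2l; rewrite ?ltW.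
  rewrite ltr_pdivlMr // in HN'; nra.
apply/ereal_infP => _ [delta delta0 <-].
rewrite /= in delta0.
apply/lee_addgt0Pr => e e0.
pose r0 := Num.min ef (Num.min eci ec).
have r00 : 0 < r0 by rewrite !lt_min ef0 eci0 ec0.
have ref : r0 <= ef by rewrite /r0 ge_min lexx.
have reci : r0 <= eci by rewrite /r0 !ge_min lexx orbT.
have rec : r0 <= ec by rewrite /r0 !ge_min lexx !orbT.
pose M := enorm dbar + 1.
have M1 : 1 <= M by rewrite /M lerDr enorm_ge0.
pose mm := Num.min delta (r0 / 2).
have mm0 : 0 < mm by rewrite lt_min delta0 divr_gt0.
pose B := mm / M.
have B0 : 0 < B by rewrite divr_gt0 // (lt_le_trans _ M1).
have [N1 HN1] := xcvg mm mm0.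
have two0 : (0:R) < 2 by [].
have hLc : 0 < `|Lc| + 1 by rewrite ltr_pwDr.
have hLf : 0 < `|Lf| + 1 by rewrite ltr_pwDr.
have [N2 HN2] := ucvg (e / 2 / (`|Lc| + 1)) (divr_gt0 (divr_gt0 e0 two0) hLc).
have hm3 : 0 < Num.min 1 (Num.min (e / 2 / (`|Lf| + 1)) (theta_Delta * B)).
  by rewrite !lt_min ltr01 /=; apply/andP; split; [exact: divr_gt0 (divr_gt0 e0 two0) hLf | exact: mulr_gt0].
have [N3 HN3] := rev _ hm3.
pose j := maxn N1 (maxn N2 N3).
have hx := HN1 j (leq_maxl _ _).
have hu := HN2 j (leq_trans (leq_maxl N2 N3) (leq_maxr _ _)).
have hr := HN3 j (leq_trans (leq_maxr N2 N3) (leq_maxr _ _)).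
rewrite !lt_min in hr; case/and3P: hr => hr1 hr2 hr3.
have [Hnd HD HDel Hpow _] := pf_info _ (sig_pf j).
have [dk0 tD] := HD _ (dD j).
have t0 : 0 < enorm (d j) by exact: enorm_gt0.
have rk0 := rho_pos (sig j).
have hpw : rho (sig j) `^ beta <= rho (sig j) by apply: ge1r_powR; rewrite ?rk0 ?ltW.
have tB : enorm (d j) < B.
  have := ler_wpM2l (ltW td0) tD; rewrite -HDel => ?; nra.
have tM : enorm (d j) * M < mm by rewrite -ltr_pdivlMr // (lt_le_trans ltr01 M1).
have en0 := enorm_ge0 dbar.
have tdelta : enorm (d j) < delta.
  have : mm <= delta by rewrite /mm ge_min lexx.
  rewrite /M in tM; nra.
have tr2 : enorm (d j) + enorm (d j) * enorm dbar < r0 / 2.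
  have : mm <= r0 / 2 by rewrite /mm ge_min lexx orbT.
  rewrite /M in tM; nra.
have xr2 : enorm (x (sig j) - xbar) < r0 / 2.
  by apply: lt_le_trans hx _; rewrite /mm ge_min lexx orbT.
have xdelta : enorm (x (sig j) - xbar) < delta.
  by apply: lt_le_trans hx _; rewrite /mm ge_min lexx.
have h0 : enorm (x (sig j) - xbar) < r0 by lra.
have h1 : enorm (x (sig j) + d j - xbar) < r0.
  have hh0 := mulr_ge0 (ltW t0) en0.
  rewrite addrAC; apply: le_lt_trans (enormD _ _) _; lra.
have h2 : enorm (x (sig j) + enorm (d j) *: dbar - xbar) < r0.
  rewrite addrAC; apply: le_lt_trans (enormD _ _) _.
  rewrite enormZ ger0_norm ?ltW //; lra.
have [Ff0 _] := HLf _ _ (lt_le_trans h0 ref) (lt_le_trans h0 ref).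
have [Ff1 Hfl] := HLf _ _ (lt_le_trans h1 ref) (lt_le_trans h0 ref).
have [Ci0 _] := HLci _ _ (lt_le_trans h0 reci) (lt_le_trans h0 reci).
have [Ci1 _] := HLci _ _ (lt_le_trans h1 reci) (lt_le_trans h0 reci).
have [Ce0 _] := HLc _ _ (lt_le_trans h0 rec) (lt_le_trans h0 rec).
have [Ce1 _] := HLc _ _ (lt_le_trans h1 rec) (lt_le_trans h0 rec).
have [Ce2 Hcl] := HLc _ _ (lt_le_trans h2 rec) (lt_le_trans h1 rec).
have ea : x (sig j) + d j - x (sig j) = d j by rewrite addrAC subrr add0r.
rewrite ea in Hfl.
have eb : x (sig j) + enorm (d j) *: dbar - (x (sig j) + d j) = enorm (d j) *: dbar - d j.
  by rewrite opprD addrACA subrr add0r.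
rewrite eb in Hcl.
have Hz : (zmerit f g h Gint (rho (sig j)) (x (sig j)) <=
           zmerit f g h Gint (rho (sig j)) (x (sig j) + d j))%E.
  by rewrite leNgt; apply/negP; exact: Hnd.
have cn0 := cint_neg (sig j).
have cle := cint_le j.
have cn1 := le_lt_trans cle cn0.
rewrite /zmerit cn0 cn1 in Hz.
rewrite -(fineK Ff0) -(fineK Ff1) -(fineK Ce0) -(fineK Ce1) in Hz.
rewrite -!EFinM -!EFinD lee_fin in Hz.
rewrite -(fineK Ci0) -(fineK Ci1) lee_fin in cle.
rewrite -(fineK Ci0) lte_fin in cn0.
set F0 := fine (f (x (sig j))) in Hz Hfl.
set F1 := fine (f (x (sig j) + d j)) in Hz Hfl.
set E0 := fine (cext g h Gint (x (sig j))) in Hz.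
set E1 := fine (cext g h Gint (x (sig j) + d j)) in Hz Hcl.
set C0 := fine (cint g Gint (x (sig j))) in Hz cle cn0.
set C1 := fine (cint g Gint (x (sig j) + d j)) in Hz cle.
set t := enorm (d j) in Hcl t0 tdelta hu Hfl.
set rk := rho (sig j) in Hz rk0 hr2.
have hl : ln (- C0) <= ln (- C1) by rewrite ler_ln ?posrE; lra.
set E2 := fine (cext g h Gint (x (sig j) + t *: dbar)) in Hcl.
pose q := (E2 - E0) * t^-1.
apply: (@le_trans _ _ (q%:E + e%:E)%E); last first.
  apply: leeD => //; apply: ereal_sup_ge; exists q%:E => //.
  exists (x (sig j)), t; split => //.
  by rewrite /q /E2 /E0 -(fineK Ce2) -(fineK Ce0) -EFinB -EFinM.
rewrite -EFinD lee_fin.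
have eqv : t *: dbar - d j = t *: (dbar - t^-1 *: d j).
  by rewrite scalerBr scalerA divff ?scale1r // lt0r_neq0.
rewrite eqv enormZ (ger0_norm (ltW t0)) enormB in Hcl.
set nu := enorm (t^-1 *: d j - dbar) in Hcl hu.
have nu0 : 0 <= nu by exact: enorm_ge0.
have s1 : rk * ln (- C0) <= rk * ln (- C1) by rewrite ler_pM2l.
have s2 : rk^-1 * E0 - rk^-1 * E1 <= `|Lf| * t.
  apply: (aux_s2 Hz s1 Hfl).
  by apply: ler_wpM2r; [exact: ltW | exact: ler_norm].
have s3 : E0 - E1 <= rk * (`|Lf| * t).
  have -> : E0 - E1 = rk * (rk^-1 * E0 - rk^-1 * E1).
    by rewrite mulrBr !mulrA mulfV ?lt0r_neq0 // !mul1r.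
  by rewrite ler_pM2l.
have s4 : E1 - E2 <= `|Lc| * (t * nu).
  have hh1 : Lc * (t * nu) <= `|Lc| * (t * nu).
    by apply: ler_wpM2r; [exact: mulr_ge0 (ltW t0) nu0 | exact: ler_norm].
  have hh2 : E1 - E2 <= `|E2 - E1| by rewrite distrC ler_norm.
  exact: le_trans hh2 (le_trans Hcl hh1).
have s5 : rk * `|Lf| <= e / 2 by exact: aux_s5 (ltW rk0) (normr_ge0 _) hr2.
have s6 : `|Lc| * nu <= e / 2.
  by rewrite mulrC; exact: aux_s5 nu0 (normr_ge0 _) hu.
have hfin := aux_fin t0 nu0 (ltW rk0) s3 s4 s5 s6.
rewrite /q.
have : - e <= (E2 - E0) / t by rewrite ler_pdivlMr.
move=> H; have := addr_ge0 (ltW e0) (ltW e0); lra.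
Qed.
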